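(* Let $D_\infty$ be the infinite dihedral group, given by the monoid presentation $\langle a,b\mid a^2=1,\ b^2=1\rangle$. Then: (1) $D_\infty$ belongs to the Mal'cev product $\mathbf{Com}\,ⓜ\,\mathbf{Fin}$. (2) For every $n\ge1$ the Zimin word $Z_n$ is an isoterm relative to $D_\infty$. Consequently, the semigroup identities of $D_\infty$ admit no finite basis.
   Context: The Zimin words are defined by $Z_1=x_1$ and $Z_{n+1}=Z_n\,x_{n+1}\,Z_n$. A word $v$ is an isoterm relative to a semigroup $S$ if the only word $v'$ such that $S$ satisfies $v\approx v'$ is $v'=v$. For classes of semigroups $\mathbf{A},\mathbf{B}$, the Mal'cev product $\mathbf{A}\,ⓜ\,\mathbf{B}$ is the class of all semigroups $S$ admitting a congruence $\theta$ such that $S/\theta\in\mathbf{B}$ and every $\theta$-class that is a subsemigroup of $S$ lies in $\mathbf{A}$. $\mathbf{Com}$ denotes the class of commutative semigroups and $\mathbf{Fin}$ the class of finite semigroups. The identities considered are semigroup identities, i.e. identities $u\approx v$ between nonempty words. *)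

(* Defs.v *)
From mathcomp Require Import all_boot.
Set Implicit Arguments. Unset Strict Implicit. Unset Printing Implicit Defensive.

(* Variables are natural numbers; a word is a sequence of variables.
   Identities are between NONEMPTY words. *)
Definition word := seq nat.

(* Zimin words: zimin 1 = x1, zimin (n+1) = zimin n x_(n+1) zimin n.
   (zimin 0 = empty word is never used.) *)
Fixpoint zimin (n : nat) : word :=
  match n with
  | 0 => [::]
  | m.+1 => zimin m ++ m.+1 :: zimin m
  end.

Definition eval_word (T : Type) (mul : T -> T -> T) (phi : nat -> T) (w : word)
  : option T :=
  match w with
  | [::] => None
  | x :: w' => Some (foldl (fun acc y => mul acc (phi y)) (phi x) w')
  end.

Definition satisfies (T : Type) (mul : T -> T -> T) (u v : word) : Prop :=
  forall phi : nat -> T, eval_word mul phi u = eval_word mul phi v.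

Definition isoterm (T : Type) (mul : T -> T -> T) (v : word) : Prop :=
  forall v' : word, v' != [::] -> satisfies mul v v' -> v' = v.

Definition in_Com_malcev_Fin (T : Type) (mul : T -> T -> T) : Prop :=
  exists theta : T -> T -> Prop,
    [/\
        (forall x, theta x x) /\
        (forall x y, theta x y -> theta y x),
        (forall x y z, theta x y -> theta y z -> theta x z),
        (forall x y z w, theta x y -> theta z w -> theta (mul x z) (mul y w)),
        (exists (n : nat) (r : 'I_n -> T), forall x, exists i, theta x (r i)) &
        (* every theta-class which is a subsemigroup is commutative *)
        (forall x,
           (forall y z, theta x y -> theta x z -> theta x (mul y z)) ->
           forall y z, theta x y -> theta x z -> mul y z = mul z y)].

Definition subst_word (sigma : nat -> word) (w : word) : word :=
  flatten (map sigma w).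

Inductive derives (Sigma : seq (word * word)) : word -> word -> Prop :=
  | der_ax u v : (u, v) \in Sigma -> derives Sigma u v
  | der_refl u : derives Sigma u u
  | der_sym u v : derives Sigma u v -> derives Sigma v u
  | der_trans u v w : derives Sigma u v -> derives Sigma v w -> derives Sigma u w
  | der_subst (sigma : nat -> word) u v :
      (forall x, sigma x != [::]) ->
      derives Sigma u v -> derives Sigma (subst_word sigma u) (subst_word sigma v)
  | der_mult p q u v :
      derives Sigma u v -> derives Sigma (p ++ u ++ q) (p ++ v ++ q).

Definition has_finite_basis (T : Type) (mul : T -> T -> T) : Prop :=
  exists Sigma : seq (word * word),
    (forall e, e \in Sigma -> [/\ e.1 != [::], e.2 != [::] & satisfies mul e.1 e.2]) /\
    (forall u v, u != [::] -> v != [::] -> satisfies mul u v -> derives Sigma u v).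

(* Elements are the normal forms of the presentation: words over {a,b}
   (a = false, b = true) with no two equal adjacent letters.  The product
   is concatenation followed by cancellation of aa and bb. *)
Definition reduced (s : seq bool) : bool := sorted (fun x y : bool => x != y) s.

Definition push (x : bool) (w : seq bool) : seq bool :=
  if w is y :: w' then (if x == y then w' else x :: w) else [:: x].

Definition reduce (s : seq bool) : seq bool := foldr push [::] s.

Lemma push_reduced x w : reduced w -> reduced (push x w).
Proof.
case: w => [|y w] //= Hw.
case: eqP => [_|/eqP nxy]; first exact: (path_sorted Hw).
by rewrite /= nxy Hw.
Qed.

Lemma reduce_reduced s : reduced (reduce s).
Proof. by elim: s => [|x s IH] //=; apply: push_reduced. Qed.

Definition Dinf : Type := {s : seq bool | reduced s}.

Definition Dinf_mul (u v : Dinf) : Dinf :=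
  exist _ (reduce (sval u ++ sval v)) (reduce_reduced _).

(* Main.v *)
Require Import Defs.
From mathcomp Require Import all_boot.
From Stdlib Require Import ZArith Lia.
From mathcomp Require Import zify.
Set Implicit Arguments. Unset Strict Implicit. Unset Printing Implicit Defensive.

Definition M : Type := (Z * bool)%type.
Definition sgn (e : bool) (k : Z) : Z := if e then Z.opp k else k.
Definition mulM (p q : M) : M := (Z.add p.1 (sgn p.2 q.1), xorb p.2 q.2).
Definition oneM : M := (0%Z, false).

Lemma mulMA p q r : mulM p (mulM q r) = mulM (mulM p q) r.
Proof.
case: p => [a e]; case: q => [b f]; case: r => [c g].
rewrite /mulM /sgn /=; case: e; case: f; case: g => /=; f_equal; lia.
Qed.
Lemma mul1M p : mulM oneM p = p.
Proof. by case: p => a e; rewrite /mulM /sgn /=; f_equal; lia. Qed.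
Lemma mulM1 p : mulM p oneM = p.
Proof. case: p => a e; rewrite /mulM /sgn /=; case: e; f_equal; try lia; done. Qed.

Definition lett (c : bool) : M := if c then (1%Z, true) else (0%Z, true).
Definition H (l : seq bool) : M := foldr (fun c acc => mulM (lett c) acc) oneM l.

Lemma lettK c : mulM (lett c) (lett c) = oneM.
Proof. by case: c; rewrite /mulM /sgn /=; f_equal. Qed.

Lemma H_push x w : H (push x w) = mulM (lett x) (H w).
Proof.
case: w => [|y w] //=.
case: eqP => [<-|_] //=.
by rewrite mulMA lettK mul1M.
Qed.

Lemma H_reduce l : H (reduce l) = H l.
Proof. by elim: l => [|x l IH] //=; rewrite H_push IH. Qed.

Lemma H_cat l1 l2 : H (l1 ++ l2) = mulM (H l1) (H l2).
Proof. elim: l1 => [|x l IH] /=; first by rewrite mul1M. by rewrite IH mulMA. Qed.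

Fixpoint alt (c : bool) (m : nat) : seq bool :=
  if m is m'.+1 then c :: alt (~~ c) m' else [::].

Lemma alt_reduced c m : reduced (alt c m).
Proof.
elim: m c => [|m IH] c //=.
case: m IH => [|m] IH //=.
by have := IH (~~ c); rewrite /= /reduced /= => ->; rewrite andbT; case: c.
Qed.

Lemma reduced_alt l : reduced l -> l = alt (head false l) (size l).
Proof.
elim: l => [|x l IH] //= Hl.
case: l IH Hl => [|y l] IH //= /andP [nxy Hl].
have Ey : y = ~~ x by case: x y nxy {IH Hl} => [] [].
by rewrite {1}IH //= Ey.
Qed.

Lemma H_cons c l : H (c :: l) = mulM (lett c) (H l). Proof. by []. Qed.
Lemma alt_S c m : alt c m.+1 = c :: alt (~~ c) m. Proof. by []. Qed.
Lemma alt_SS c m : alt c m.+2 = c :: ~~ c :: alt c m. Proof. by rewrite /= negbK. Qed.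

Lemma H_alt_even c j :
  H (alt c (j.*2)) = ((if c then Z.of_nat j else Z.opp (Z.of_nat j)), false).
Proof.
elim: j c => [|j IH] c; first by case: c.
rewrite doubleS alt_SS !H_cons IH /mulM /sgn; case: c; cbn [fst snd lett xorb negb]; f_equal; rewrite ?Nat2Z.inj_succ; lia.
Qed.

Lemma H_alt_odd c j :
  H (alt c (j.*2).+1) = ((if c then Z.add 1 (Z.of_nat j) else Z.opp (Z.of_nat j)), true).
Proof.
rewrite alt_S H_cons H_alt_even /mulM /sgn; case: c; cbn [fst snd lett xorb negb]; f_equal; lia.
Qed.

Definition G (p : M) : seq bool :=
  let (k, e) := p in
  if e then (if Z.leb k 0 then alt false (Z.to_nat (Z.opp k)).*2.+1
             else alt true (Z.to_nat (Z.sub k 1)).*2.+1)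
  else (if Z.ltb k 0 then alt false (Z.to_nat (Z.opp k)).*2
        else alt true (Z.to_nat k).*2).

Lemma HG p : H (G p) = p.
Proof.
case: p => k e; rewrite /G; case: e.
- case: (Z.leb_spec k 0) => Hk; rewrite H_alt_odd; f_equal; lia.
- case: (Z.ltb_spec k 0) => Hk; rewrite H_alt_even; f_equal; lia.
Qed.

Lemma G_reduced p : reduced (G p).
Proof.
case: p => k e; rewrite /G; case: e;
[case: (Z.leb k 0) | case: (Z.ltb k 0)]; apply: alt_reduced.
Qed.

Lemma GH l : reduced l -> G (H l) = l.
Proof.
move=> /reduced_alt ->.
set c := head false l; set m := size l.
have Em := odd_double_half m; case: (odd m) Em => Em; rewrite -Em.
- rewrite add1n H_alt_odd /G; case: c.
  + have -> : Z.leb (Z.add 1 (Z.of_nat m./2)) 0 = false by apply/Z.leb_gt; lia.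
    by do 3 f_equal; lia.
  + have -> : Z.leb (Z.opp (Z.of_nat m./2)) 0 = true by apply/Z.leb_le; lia.
    by do 3 f_equal; lia.
- rewrite add0n H_alt_even /G; case: c.
  + have -> : Z.ltb (Z.of_nat m./2) 0 = false by apply/Z.ltb_ge; lia.
    by do 2 f_equal; lia.
  + case: (m./2) => [|j] //.
    have -> : Z.ltb (Z.opp (Z.of_nat j.+1)) 0 = true by apply/Z.ltb_lt; lia.
    by do 2 f_equal; lia.
Qed.

Definition h (x : Dinf) : M := H (sval x).
Lemma h_mul x y : h (Dinf_mul x y) = mulM (h x) (h y).
Proof. by rewrite /h /Dinf_mul /= H_reduce H_cat. Qed.
Lemma h_inj x y : h x = h y -> x = y.
Proof.
case: x => l Hl; case: y => l' Hl'; rewrite /h /= => E.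
have E' : l = l' by rewrite -(GH Hl) -(GH Hl') E.
subst l'; congr exist; apply: bool_irrelevance.
Qed.
Definition hinv (p : M) : Dinf := exist _ (G p) (G_reduced p).
Lemma h_hinv p : h (hinv p) = p.
Proof. exact: HG. Qed.

Definition mval (psi : nat -> M) (w : word) : M :=
  foldr (fun z acc => mulM (psi z) acc) oneM w.
Definition meqM (u v : word) : Prop := forall psi, mval psi u = mval psi v.

Lemma mval_cat psi a b : mval psi (a ++ b) = mulM (mval psi a) (mval psi b).
Proof. elim: a => [|x a IH] /=; first by rewrite mul1M. by rewrite IH mulMA. Qed.

Lemma mval_ext psi psi' w : (forall x, x \in w -> psi x = psi' x) ->
  mval psi w = mval psi' w.
Proof.
elim: w => [|x w IH] //= E; rewrite E ?mem_head // IH // => y Hy.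
by apply: E; rewrite in_cons Hy orbT.
Qed.

Lemma h_foldl (phi : nat -> Dinf) acc w :
  h (foldl (fun a y => Dinf_mul a (phi y)) acc w) =
  mulM (h acc) (mval (fun z => h (phi z)) w).
Proof.
elim: w acc => [|y w IH] acc /=; first by rewrite mulM1.
by rewrite IH h_mul mulMA.
Qed.

Lemma eq_mval psi psi' w : psi =1 psi' -> mval psi w = mval psi' w.
Proof. by move=> E; apply: mval_ext => x _; apply: E. Qed.

Lemma sat_meq u v : satisfies Dinf_mul u v -> u != [::] -> v != [::] -> meqM u v.
Proof.
move=> S; case: u S => [|x u] //; case: v => [|y v] // S _ _ psi.
have := S (fun z => hinv (psi z)); rewrite /eval_word => [[E]].
have := congr1 h E; rewrite !h_foldl !h_hinv /=.
rewrite !(@eq_mval (fun z => h (hinv (psi z))) psi) // => z; exact: h_hinv.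
Qed.

Lemma meq_sat u v : meqM u v -> u != [::] -> v != [::] -> satisfies Dinf_mul u v.
Proof.
case: u => [|x u] //; case: v => [|y v] // E _ _ phi; rewrite /eval_word.
congr Some; apply: h_inj; rewrite !h_foldl.
exact: (E (fun z => h (phi z))).
Qed.

Definition indic x : nat -> M := fun z => if z == x then (1%Z, false) else oneM.
Lemma mval_indic x w : mval (indic x) w = (Z.of_nat (count_mem x w), false).
Proof.
elim: w => [|y w IH] //.
have -> : count_mem x (y::w) = (y == x) + count_mem x w by [].
rewrite /= IH /indic; case: (y == x); rewrite /mulM /sgn /oneM; cbn [fst snd xorb];
rewrite ?add1n ?add0n ?Nat2Z.inj_succ; f_equal; try exact: Z.add_1_l.
Qed.
Lemma meq_count u v x : meqM u v -> count_mem x u = count_mem x v.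
Proof. move=> /(_ (indic x)); rewrite !mval_indic => [[E]]; exact: Nat2Z.inj E. Qed.

Lemma mval_size w : mval (fun _ => (1%Z, false)) w = (Z.of_nat (size w), false).
Proof. elim: w => [|y w IH] //; rewrite [mval _ _]/= IH /mulM /sgn; cbn [fst snd xorb size]; rewrite ?Nat2Z.inj_succ; f_equal; lia. Qed.
Lemma meq_size u v : meqM u v -> size u = size v.
Proof. move=> /(_ (fun _ => (1%Z, false))); rewrite !mval_size => [[E]]; exact: Nat2Z.inj E. Qed.

Lemma meq_refl u : meqM u u. Proof. by []. Qed.
Lemma meq_sym u v : meqM u v -> meqM v u. Proof. by move=> E psi; rewrite E. Qed.
Lemma meq_ctx p q u v : meqM u v -> meqM (p ++ u ++ q) (p ++ v ++ q).
Proof. by move=> E psi; rewrite !mval_cat E. Qed.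

Lemma cancel2 a b a' b' :
  (forall g, mulM a (mulM g b) = mulM a' (mulM g b')) -> a = a' /\ b = b'.
Proof.
case: a => a e; case: b => b f; case: a' => a' e'; case: b' => b' f' E.
have E1 := E (0%Z, false); have E2 := E (0%Z, true); have E3 := E (1%Z, false).
move: E1 E2 E3; clear E; rewrite /mulM /sgn; cbn [fst snd].
case: e f e' f' => [] [] [] []; cbn [xorb negb fst snd];
  move=> /pair_equal_spec [E1 F1] /pair_equal_spec [E2 F2] /pair_equal_spec [E3 F3];
  try discriminate; split; f_equal; lia.
Qed.

Lemma cancell g p q : mulM g p = mulM g q -> p = q.
Proof.
case: g => a e; case: p => b f; case: q => c k; rewrite /mulM /sgn; cbn [fst snd].
case: e f k => [] [] []; cbn [xorb negb fst snd]; move=> /pair_equal_spec [E F]; try discriminate; f_equal; lia.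
Qed.
Lemma cancelr g p q : mulM p g = mulM q g -> p = q.
Proof.
case: g => a e; case: p => b f; case: q => c k; rewrite /mulM /sgn; cbn [fst snd].
case: e f k => [] [] []; cbn [xorb negb fst snd]; move=> /pair_equal_spec [E F]; try discriminate; f_equal; lia.
Qed.

Lemma count_notin (x : nat) (s : seq nat) : x \notin s -> count_mem x s = 0.
Proof. by move=> H; apply/count_memPn. Qed.

Lemma meq_split A x B v : meqM (A ++ x :: B) v -> x \notin A -> x \notin B ->
  exists A' B', [/\ v = A' ++ x :: B', meqM A A' & meqM B B'].
Proof.
move=> E nA nB.
have Cv := meq_count x E.
rewrite count_cat /= eqxx count_notin // count_notin // in Cv.
have Hv : x \in v by rewrite -has_pred1 has_count -Cv.
move: E Cv; case/splitPr: Hv => A' B' E Cv.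
rewrite count_cat /= eqxx [true + _]add1n in Cv.
have H0 : forall a b : nat, 0 + (1+0) = a + b.+1 -> a = 0 /\ b = 0 by move=> a b; lia.
case: (H0 _ _ Cv) => Ca Cb.
have nA' : x \notin A' by apply/count_memPn; exact: Ca.
have nB' : x \notin B' by apply/count_memPn; exact: Cb.
exists A', B'; split => //; last first.
all: move=> psi.
all: have := @cancel2 (mval psi A) (mval psi B) (mval psi A') (mval psi B').
all: case.
all: try (move=> g; have := E (fun z => if z == x then g else psi z);
  rewrite !mval_cat /=; rewrite eqxx;
  rewrite (@mval_ext _ psi A) ?(@mval_ext _ psi B) ?(@mval_ext _ psi A')
    ?(@mval_ext _ psi B') //;
  by move=> z Hz; case: eqP => // Ez; subst z;
     first [rewrite Hz in nA | rewrite Hz in nB | rewrite Hz in nA' | rewrite Hz in nB']).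
all: by [].
Qed.

Lemma mval_cons psi x w : mval psi (x :: w) = mulM (psi x) (mval psi w).
Proof. by []. Qed.

Lemma mval_nil psi : mval psi [::] = oneM. Proof. by []. Qed.

Lemma split_first (x : nat) (v : seq nat) : x \in v ->
  exists B R, v = B ++ x :: R /\ x \notin B.
Proof.
elim: v => [|y v IH] //; rewrite in_cons; case: eqP => [->|ne] /= H.
  by exists [::], v.
case: (IH H) => B [R [-> nB]]; exists (y :: B), R; split => //.
by rewrite in_cons negb_or nB andbT; apply/eqP.
Qed.

Definition psi0 (x : nat) : nat -> M :=
  fun z => if z == x then (0%Z, true) else (1%Z, false).
Lemma mval_free x w : x \notin w -> mval (psi0 x) w = (Z.of_nat (size w), false).
Proof.
elim: w => [|y w IH] //; rewrite in_cons negb_or => /andP [ny nw].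
rewrite mval_cons IH // /psi0 eq_sym (negbTE ny) /mulM /sgn; cbn [fst snd xorb size].
rewrite Nat2Z.inj_succ; f_equal; lia.
Qed.

Lemma meq_wrap x A v : meqM (x :: A ++ [:: x]) v -> x \notin A ->
  exists C, v = x :: C ++ [:: x] /\ meqM A C.
Proof.
move=> E nA.
have Cv := meq_count x E.
have Cl : count_mem x (x :: A ++ [:: x]) = 2.
  by rewrite /= count_cat count_notin //= eqxx.
rewrite Cl in Cv.
have Hv : x \in v by rewrite -has_pred1 has_count -Cv.
case: (split_first Hv) => B [R [Ev nB]]; subst v.
rewrite count_cat count_notin //= eqxx in Cv.
have HR : x \in R by rewrite -has_pred1 has_count; move: Cv; case: (count _ R) => //.
case: (split_first HR) => C [D [ER nC]]; subst R.
rewrite count_cat count_notin //= eqxx in Cv.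
have nD : x \notin D.
  apply/count_memPn; move: Cv; case: (count _ D) => //.
have Sz := meq_size E.
rewrite /= !size_cat /= size_cat /= in Sz.
have E0 := E (psi0 x).
have Ex : psi0 x x = (0%Z, true) by rewrite /psi0 eqxx.
move: E0; rewrite !(mval_cat, mval_cons) mval_nil Ex (mval_free nA) (mval_free nB) (mval_free nC) (mval_free nD).
 rewrite /mulM /sgn /oneM; cbn [fst snd xorb].
move=> /pair_equal_spec [E1 _].
have key : forall a b c d : nat, (a + 1).+1 = b + (c + d.+1).+1 ->
  (0 + - (Z.of_nat a + (0 + - 0)))%Z = (Z.of_nat b + (0 + - (Z.of_nat c + (0 + - Z.of_nat d))))%Z ->
  b + d = 0 by move=> a b c d; lia.
have HBD : size B + size D = 0 by exact: (key _ _ _ _ Sz E1).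
have /eqP := HBD; rewrite addn_eq0 => /andP [/eqP /size0nil B0 /eqP /size0nil D0].
subst B D; exists C; split => //.
move=> psi; have := E psi; rewrite /= !mval_cat !mval_cons.
by move=> /cancell /cancelr.
Qed.

Definition rigid (w : word) : Prop := forall v, meqM w v -> v = w.

Lemma rigid_nil : rigid [::].
Proof. by move=> v /meq_size /esym /size0nil. Qed.

Lemma rigid_split A x B : rigid A -> rigid B -> x \notin A -> x \notin B ->
  rigid (A ++ x :: B).
Proof.
move=> rA rB nA nB v E; case: (meq_split E nA nB) => A' [B' [-> EA EB]].
by rewrite (rA _ EA) (rB _ EB).
Qed.

Lemma rigid_wrap x A : rigid A -> x \notin A -> rigid (x :: A ++ [:: x]).
Proof. by move=> rA nA v E; case: (meq_wrap E nA) => C [-> EC]; rewrite (rA _ EC). Qed.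

Lemma rigid_infix p w q : rigid (p ++ w ++ q) -> rigid w.
Proof.
move=> r v E; have := r _ (meq_ctx p q E).
have Sz : size v = size w by rewrite (meq_size E).
by move/eqP; rewrite eqseq_cat // => /andP [_]; rewrite eqseq_cat // => /andP [/eqP].
Qed.

Lemma rigid_infixb w u : rigid u -> infix w u -> rigid w.
Proof. by move=> r /infixP [p [q E]]; subst u; apply: rigid_infix r. Qed.

Lemma zimin_mem n x : x \in zimin n -> 0 < x <= n.
Proof.
elim: n => [|n IH] //=; rewrite mem_cat in_cons => /orP [/IH|/orP [/eqP ->|/IH]].
- by case/andP => -> /leqW.
- by rewrite leqnn.
- by case/andP => -> /leqW.
Qed.

Lemma rigid_zimin n : rigid (zimin n).
Proof.
elim: n => [|n IH] /=; first exact: rigid_nil.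
have nz : n.+1 \notin zimin n by apply/negP => /zimin_mem; rewrite ltnn andbF.
exact: rigid_split.
Qed.

Lemma zimin_nonnil n : 1 <= n -> zimin n != [::].
Proof. by case: n => //= n _; case: (zimin n). Qed.

Lemma part2 (n : nat) : 1 <= n -> isoterm Dinf_mul (zimin n).
Proof.
move=> Hn v nv S; apply: rigid_zimin.
exact: sat_meq S (zimin_nonnil Hn) nv.
Qed.

Lemma part1 : in_Com_malcev_Fin Dinf_mul.
Proof.
exists (fun x y => (h x).2 = (h y).2); split.
- by split => // x y ->.
- by move=> x y z -> ->.
- by move=> x y z w Exy Ezw; rewrite !h_mul /mulM /= Exy Ezw.
- exists 2, (fun i : 'I_2 => if val i == 0 then hinv oneM else hinv (0%Z, true)).
  move=> x; case Ex: (h x).2.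
  + by exists (Ordinal (isT : 1 < 2)); rewrite [val _]/= h_hinv.
  + by exists (Ordinal (isT : 0 < 2)); rewrite [val _]/= h_hinv.
- move=> x Hcl y z Hy Hz.
  have Hx : (h x).2 = false.
    case Ex: (h x).2 => //; have := Hcl x x erefl erefl.
    by rewrite h_mul /mulM /= Ex.
  apply: h_inj; rewrite !h_mul.
  move: Hy Hz; rewrite Hx; case: (h y) => a e; case: (h z) => b f /= <- <-.
  rewrite /mulM /sgn /=; f_equal; lia.
Qed.

Section Sg.
Variables (T : Type) (mul : T -> T -> T).
Hypothesis mulA : forall x y z, mul x (mul y z) = mul (mul x y) z.

Definition ocomb (a b : option T) : option T :=
  match a, b with
  | Some x, Some y => Some (mul x y)
  | Some x, None => Some x
  | None, b => b
  end.

Lemma foldl_assoc (phi : nat -> T) x z w :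
  foldl (fun acc y => mul acc (phi y)) (mul x z) w =
  mul x (foldl (fun acc y => mul acc (phi y)) z w).
Proof. by elim: w z => [|y w IH] z //=; rewrite -mulA IH. Qed.

Lemma eval_cat phi a b :
  eval_word mul phi (a ++ b) = ocomb (eval_word mul phi a) (eval_word mul phi b).
Proof.
case: a => [|x a] /=; first by case: (eval_word mul phi b).
rewrite foldl_cat; case: b => [|y b] //=.
by rewrite foldl_assoc.
Qed.

Lemma eval_cons phi x w :
  eval_word mul phi (x :: w) = ocomb (Some (phi x)) (eval_word mul phi w).
Proof. by rewrite -cat1s eval_cat. Qed.

Lemma eval_nonnil phi w : w != [::] -> exists e, eval_word mul phi w = Some e.
Proof. by case: w => // x w _; eexists. Qed.

Lemma eval_subst phi (d : T) (sigma : nat -> word) w :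
  (forall x, sigma x != [::]) ->
  eval_word mul phi (subst_word sigma w) =
  eval_word mul (fun x => odflt d (eval_word mul phi (sigma x))) w.
Proof.
move=> ne; elim: w => [|x w IH] //.
rewrite eval_cons /subst_word map_cons [flatten _]/= eval_cat -/(subst_word sigma w) IH.
by case: (eval_nonnil phi (ne x)) => e ->.
Qed.

Lemma sound (Sigma : seq (word * word)) u v :
  (forall e, e \in Sigma -> satisfies mul e.1 e.2) ->
  derives Sigma u v -> satisfies mul u v.
Proof.
move=> HS; elim => {u v}.
- by move=> u v /HS.
- by [].
- by move=> u v _ IH phi; rewrite IH.
- by move=> u v w _ IH1 _ IH2 phi; rewrite IH1 IH2.
- move=> sigma u v ne _ IH phi.
  by rewrite !(eval_subst phi (phi 0) _ ne) IH.
- by move=> p q u v _ IH phi; rewrite !eval_cat IH.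
Qed.
End Sg.

Definition pal (l : seq nat) : word := l ++ rev l.
Lemma pal_cons x l : pal (x :: l) = x :: pal l ++ [:: x].
Proof. by rewrite /pal rev_cons -cats1 catA. Qed.

Lemma rigid_pal l : uniq l -> rigid (pal l).
Proof.
elim: l => [|x l IH] /=; first by move=> _; exact: rigid_nil.
move=> /andP [nx ul]; rewrite pal_cons; apply: rigid_wrap; first exact: IH.
by rewrite /pal mem_cat mem_rev negb_or nx.
Qed.

Definition Cw n : word := pal (iota 1 n).
Definition Uw n : word := Cw n ++ [:: 0; 0].

Lemma Cw_S n : Cw n.+1 = 1 :: pal (iota 2 n) ++ [:: 1].
Proof. by rewrite /Cw /= pal_cons. Qed.

Lemma notin_pal x l : x \notin l -> x \notin pal l.
Proof. by move=> nx; rewrite /pal mem_cat mem_rev negb_or nx. Qed.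

Lemma rigid_pre n : rigid (Cw n ++ [:: 0]).
Proof.
apply: rigid_split; [apply: rigid_pal; exact: iota_uniq | exact: rigid_nil | | by []].
by apply: notin_pal; rewrite mem_iota.
Qed.

Lemma rigid_suf n : rigid (pal (iota 2 n) ++ 1 :: [:: 0; 0]).
Proof.
apply: rigid_split.
- apply: rigid_pal; exact: iota_uniq.
- by have := @rigid_wrap 0 [::] rigid_nil; apply.
- by apply: notin_pal; rewrite mem_iota.
- by [].
Qed.

Lemma U_pre n : Uw n = rcons (Cw n ++ [:: 0]) 0.
Proof. by rewrite /Uw -cats1 -catA. Qed.
Lemma U_suf n : Uw n.+1 = 1 :: (pal (iota 2 n) ++ 1 :: [:: 0; 0]).
Proof. by rewrite /Uw Cw_S /= -catA. Qed.

Lemma infix_proper (w u u1 u2 : word) a b :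
  infix w u -> w != u -> u = a :: u1 -> u = rcons u2 b -> infix w u1 \/ infix w u2.
Proof.
move=> /infixP [p [q E]] nwu E1 E2.
case: p E => [|c p] E.
  case/lastP: q E => [|q b'] E; first by rewrite E cats0 eqxx in nwu.
  right; rewrite /= -rcons_cat E2 in E.
  by case: (rcons_inj E) => -> _; apply: prefix_infix.
left; rewrite E1 /= in E; case: E => _ ->; exact: infix_infix.
Qed.

Lemma infix_catL (a b u : word) : infix (a ++ b) u -> infix a u.
Proof. by move=> H; apply: infix_trans H; apply: prefix_infix. Qed.
Lemma infix_catR (a b u : word) : infix (a ++ b) u -> infix b u.
Proof. by move=> H; apply: infix_trans H; apply: infix_catl (infix_refl b). Qed.

Section Model.
Variable n : nat.
Local Notation U := (Uw n).

Definition mulS (a b : option word) : option word :=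
  match a, b with
  | Some x, Some y =>
      if [&& x != [::], y != [::] & infix (x ++ y) U] then Some (x ++ y) else None
  | _, _ => None
  end.

Lemma mulS_ne x y : x != [::] -> y != [::] ->
  mulS (Some x) (Some y) = if infix (x ++ y) U then Some (x ++ y) else None.
Proof. by move=> nx ny; rewrite /= nx ny. Qed.

Lemma mulSA x y z : mulS x (mulS y z) = mulS (mulS x y) z.
Proof.
case: x => [x|] //; case: y => [y|] //; case: z => [z|] /=; last first.
  by case: ifP.
case: (eqVneq x [::]) => [->|nx] /=; first by case: ifP.
case: (eqVneq y [::]) => [->|ny] /=; first by [].
case: (eqVneq z [::]) => [Ez|nz]; first by subst z; case: (infix (x ++ y) U) => //=; rewrite andbF.
rewrite /=.
have nyz : y ++ z != [::] by case: y ny.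
have nxy : x ++ y != [::] by case: x nx.
case Hall: (infix (x ++ y ++ z) U).
- have H1 : infix (y ++ z) U by apply: infix_catR Hall.
  have H2 : infix (x ++ y) U by rewrite catA in Hall; apply: infix_catL Hall.
  rewrite H1 H2 nyz Hall /= nxy nz -catA Hall.
  by [].
- case: (infix (y ++ z) U); rewrite /= ?Hall ?andbF;
  case: (infix (x ++ y) U); rewrite /= ?nxy ?nz -?catA ?Hall ?andbF //.
Qed.
End Model.

Section Eval.
Variable n : nat.
Local Notation U := (Uw n).
Variable phi : nat -> option word.

Definition goodb z := if phi z is Some l then l != [::] else false.
Definition sig_of z : word :=
  if phi z is Some l then (if l == [::] then [:: 0] else l) else [:: 0].
Lemma sig_ne z : sig_of z != [::].
Proof. by rewrite /sig_of; case: (phi z) => // l; case: ifP => // /negbT. Qed.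
Lemma good_sig z : goodb z -> phi z = Some (sig_of z).
Proof. by rewrite /goodb /sig_of; case: (phi z) => [l|] // /negbTE ->. Qed.

Local Notation f := (fun acc y => mulS n acc (phi y)).

Lemma subst_cons sigma x w : subst_word sigma (x :: w) = sigma x ++ subst_word sigma w.
Proof. by []. Qed.

Lemma foldlS_good p w : p != [::] -> all goodb w ->
  foldl f (if infix p U then Some p else None) w =
  if infix (p ++ subst_word sig_of w) U then Some (p ++ subst_word sig_of w) else None.
Proof.
elim: w p => [|z w IH] p np /=; first by rewrite /subst_word /= cats0.
case/andP => gz gw; rewrite (good_sig gz) subst_cons catA.
have E : mulS n (if infix p U then Some p else None) (Some (sig_of z)) =
         if infix (p ++ sig_of z) U then Some (p ++ sig_of z) else None.
  case Ip: (infix p U); first by rewrite mulS_ne // sig_ne.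
  by case Ipz: (infix _ U) => //; move/infix_catL: Ipz; rewrite Ip.
rewrite E IH //; by case: p np {E IH}.
Qed.

Lemma evalS_good x y w : all goodb [:: x, y & w] ->
  eval_word (mulS n) phi [:: x, y & w] =
  Some (if infix (subst_word sig_of [:: x, y & w]) U
        then Some (subst_word sig_of [:: x, y & w]) else None).
Proof.
move=> /= /and3P [gx gy gw]; rewrite (good_sig gx) (good_sig gy) mulS_ne ?sig_ne //.
rewrite foldlS_good //; last by case: (sig_of x) (sig_ne x).
by rewrite !subst_cons catA.
Qed.

Lemma foldl_None w : foldl f None w = None.
Proof. by elim: w. Qed.

Lemma mulS_bad_r a z : ~~ goodb z -> mulS n a (phi z) = None.
Proof.
rewrite /goodb; case: (phi z) => [l|]; last by case: a.
by rewrite negbK => /eqP ->; case: a => // p /=; rewrite andbF.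
Qed.
Lemma mulS_bad_l a z : ~~ goodb z -> mulS n (phi z) a = None.
Proof.
rewrite /goodb; case: (phi z) => [l|] //.
by rewrite negbK => /eqP ->; case: a.
Qed.

Lemma foldl_bad acc w : ~~ all goodb w -> foldl f acc w = None.
Proof.
elim: w acc => [|z w IH] acc //=; rewrite negb_and => /orP [bz|bw].
  by rewrite mulS_bad_r // foldl_None.
exact: IH.
Qed.

Lemma evalS_bad x y w : ~~ all goodb [:: x, y & w] ->
  eval_word (mulS n) phi [:: x, y & w] = Some None.
Proof.
rewrite /= !negb_and => /or3P [bx|bY|bw].
- by rewrite mulS_bad_l // foldl_None.
- by rewrite mulS_bad_r // foldl_None.
- by rewrite foldl_bad.
Qed.
End Eval.

Lemma subst_cat sigma a b : subst_word sigma (a ++ b) = subst_word sigma a ++ subst_word sigma b.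
Proof. by rewrite /subst_word map_cat flatten_cat. Qed.

Lemma mval_subst psi sigma w :
  mval psi (subst_word sigma w) = mval (fun x => mval psi (sigma x)) w.
Proof.
elim: w => [|x w IH] //; rewrite subst_cons mval_cat IH //.
Qed.

Lemma meq_subst sigma s t : meqM s t -> meqM (subst_word sigma s) (subst_word sigma t).
Proof. by move=> E psi; rewrite !mval_subst E. Qed.

Definition fU (n i : nat) : nat :=
  if i < n then i.+1 else if i < n + n then n + n - i else 0.

Lemma nth_U n i : nth 0 (Uw n) i = fU n i.
Proof.
rewrite /Uw /Cw /pal -catA nth_cat size_iota /fU.
case: ltnP => H1; first by rewrite nth_iota // add1n.
rewrite nth_cat size_rev size_iota.
case: ltnP => H2.
  rewrite nth_rev ?size_iota // nth_iota; last by lia.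
  have -> : i < n + n by lia.
  lia.
have -> : (i < n + n) = false by apply/negbTE; rewrite -leqNgt; lia.
by case: (i - n - n) => [|[|k]] //=; rewrite nth_nil.
Qed.

Lemma window n i j : i.+2 <= j -> j.+1 < n + n + 2 ->
  fU n i = fU n j -> fU n i.+1 = fU n j.+1 -> False.
Proof.
rewrite /fU => H1 H2.
case: (ltnP i n) => a1; case: (ltnP i.+1 n) => a2;
case: (ltnP j n) => a3; case: (ltnP j.+1 n) => a4;
case: (ltnP i (n + n)) => a5; case: (ltnP i.+1 (n + n)) => a6;
case: (ltnP j (n + n)) => a7; case: (ltnP j.+1 (n + n)) => a8; lia.
Qed.

Lemma size_Uw n : size (Uw n) = n + n + 2.
Proof. rewrite /Uw /Cw /pal !size_cat size_rev size_iota /=; lia. Qed.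

Lemma mem_Uw n x : x <= n -> x \in Uw n.
Proof.
rewrite /Uw /Cw /pal !mem_cat; case: x => [|x] H; first by rewrite !in_cons eqxx !orbT.
by rewrite mem_iota; apply/orP; left; apply/orP; left; apply/andP; split; lia.
Qed.

Lemma nth_catR (a b : word) k : nth 0 (a ++ b) (size a + k) = nth 0 b k.
Proof. by rewrite nth_cat ltnNge leq_addr /= addKn. Qed.

Lemma pre_of (a b u : word) z : a ++ b = rcons u z -> b != [::] -> infix a u.
Proof.
case/lastP: b => [|b y] // E _; rewrite -rcons_cat in E.
by case: (rcons_inj E) => <- _; apply: prefix_infix.
Qed.

Lemma suf_of (a b u : word) c : a ++ b = c :: u -> a != [::] -> infix b u.
Proof. by case: a => [|d a] //= [_ <-] _; apply: infix_catl (infix_refl b). Qed.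

Lemma subst_map sigma s : (forall z, z \in s -> size (sigma z) = 1) ->
  subst_word sigma s = map (fun z => head 0 (sigma z)) s.
Proof.
elim: s => [|x s IH] // H; rewrite subst_cons /= IH; last first.
  by move=> z zs; apply: H; rewrite in_cons zs orbT.
have := H x (mem_head _ _); case: (sigma x) => [|a [|b l]] //.
Qed.

Lemma undup_map_size (g : nat -> nat) s : size (undup (map g s)) <= size (undup s).
Proof.
rewrite -(size_map g (undup s)); apply: uniq_leq_size; first exact: undup_uniq.
move=> y; rewrite mem_undup => /mapP [z zs ->]; apply: map_f; by rewrite mem_undup.
Qed.

Lemma window_split n (s1 s2 s3 : word) c d w :
  s1 ++ (c :: d :: w) ++ s2 ++ (c :: d :: w) ++ s3 = Uw n -> False.
Proof.
move=> E.
set i := size s1; set j := size (s1 ++ (c :: d :: w) ++ s2).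
have Ei k : nth 0 (Uw n) (i + k) = nth 0 ((c :: d :: w) ++ s2 ++ (c :: d :: w) ++ s3) k.
  by rewrite -E /i nth_catR.
have Ej k : nth 0 (Uw n) (j + k) = nth 0 ((c :: d :: w) ++ s3) k.
  rewrite -E /j.
  have -> : s1 ++ (c :: d :: w) ++ s2 ++ (c :: d :: w) ++ s3 =
    (s1 ++ (c :: d :: w) ++ s2) ++ ((c :: d :: w) ++ s3) by rewrite !catA.
  by rewrite nth_catR.
have Sz := congr1 size E; rewrite size_Uw !size_cat /= in Sz.
have Hj : j = i + (size w).+2 + size s2 by rewrite /j /i !size_cat /=; lia.
have := Ei 0; have := Ei 1; have := Ej 0; have := Ej 1; rewrite !nth_U /= !addn0 !addn1.
move=> e1 e2 e3 e4.
apply: (@window n i j); first by lia.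
- lia.
- by rewrite e4 e2.
- by rewrite e3 e1.
Qed.

Lemma core m s t sigma :
  meqM s t -> size (undup s) <= m.+1 -> (forall x, sigma x != [::]) ->
  infix (subst_word sigma s) (Uw m.+1) -> subst_word sigma t = subst_word sigma s.
Proof.
move=> E Hs ne I.
have Es := meq_subst sigma E.
case: (eqVneq (subst_word sigma s) (Uw m.+1)) => Eq; last first.
  have rig : rigid (subst_word sigma s).
    case: (infix_proper I Eq (U_suf m) (U_pre m.+1)) => H.
    - exact: rigid_infixb (@rigid_suf m) H.
    - exact: rigid_infixb (@rigid_pre m.+1) H.
  exact: rig _ Es.
case Hh: (has (fun o => count_mem o s == 1) s).
- case/hasP: Hh => o os /eqP Co.
  case: (split_first os) => A [B [Es' nA]]; subst s.
  have nB : o \notin B.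
    apply/count_memPn; move: Co; rewrite count_cat count_notin //= eqxx.
    by rewrite add0n add1n => -[].
  case: (meq_split E nA nB) => A' [B' [Et EA EB]]; subst t.
  rewrite !subst_cat !subst_cons in Eq *.
  have nso : sigma o ++ subst_word sigma B != [::] by case: (sigma o) (ne o).
  have IA : infix (subst_word sigma A) (Cw m.+1 ++ [:: 0]).
    by apply: (@pre_of _ _ _ 0 _ nso); rewrite -U_pre.
  have IB : infix (subst_word sigma B) (pal (iota 2 m) ++ 1 :: [:: 0; 0]).
    apply: (@suf_of (subst_word sigma A ++ sigma o) _ _ 1).
    + by rewrite -catA Eq U_suf.
    + by case: (subst_word sigma A) => //; case: (sigma o) (ne o).
  have rA := rigid_infixb (@rigid_pre m.+1) IA.
  have rB := rigid_infixb (@rigid_suf m) IB.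
  by rewrite (rA _ (meq_subst sigma EA)) (rB _ (meq_subst sigma EB)).
- exfalso.
  have S1 : forall z, z \in s -> size (sigma z) = 1.
    move=> z zs.
    have C1 : count_mem z s != 1 by apply/negP => C; move/negP: Hh; apply; apply/hasP; exists z.
    case: (split_first zs) => s1 [r [Es1 nz1]].
    have zr : z \in r.
      move: C1; rewrite Es1 count_cat count_notin //= eqxx add0n.
      by rewrite -has_pred1 has_count; case: (count _ r).
    case: (split_first zr) => s2 [s3 [Er _]].
    subst r; rewrite Es1 !(subst_cat, subst_cons) in Eq.
    move: Eq; case: (sigma z) (ne z) => [|c [|d w]] // _ Eq.
    exfalso; exact: (window_split Eq).
  rewrite (subst_map S1) in Eq.
  have : size (undup (Uw m.+1)) <= m.+1.
    by rewrite -Eq; apply: leq_trans (undup_map_size _ _) Hs.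
  apply/negP; rewrite -ltnNge.
  have -> : m.+2 = size (iota 0 m.+2) by rewrite size_iota.
  apply: uniq_leq_size; first exact: iota_uniq.
  by move=> x; rewrite mem_iota mem_undup add0n ltnS => /andP [_]; apply: mem_Uw.
Qed.

Lemma mval_pal2 psi l : (mval psi (pal l)).2 = false.
Proof.
elim: l => [|x l IH] //; rewrite pal_cons mval_cons mval_cat mval_cons.
rewrite /mulM /=; rewrite IH; by case: (psi x).2.
Qed.

Lemma rot_comm p q : p.2 = false -> q.2 = false -> mulM p q = mulM q p.
Proof.
case: p => a e; case: q => b f /= -> ->; rewrite /mulM /sgn /=; f_equal; lia.
Qed.

Lemma witness_meq n : meqM (Uw n) ([:: 0; 0] ++ Cw n).
Proof.
move=> psi; rewrite /Uw mval_cat (mval_cat psi [:: 0; 0]); apply: rot_comm.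
  exact: mval_pal2.
by rewrite /= /mulM /=; case: (psi 0).2.
Qed.

Lemma subst_single w : subst_word (fun x => [:: x]) w = w.
Proof. by elim: w => [|x w IH] //; rewrite subst_cons IH. Qed.

Lemma infix_same (a b : word) : infix a b -> size a = size b -> a = b.
Proof.
move=> /infixP [p [q ->]]; rewrite !size_cat => Sz.
have key : forall x y z : nat, x + (y + z) = y -> x = 0 /\ z = 0 by move=> x y z; lia.
case: (key _ _ _ (esym Sz)) => P0 Q0.
by rewrite (size0nil P0) (size0nil Q0) cats0.
Qed.

Lemma evalS_single n w : 1 < size w ->
  eval_word (mulS n) (fun x => Some [:: x]) w =
  Some (if infix w (Uw n) then Some w else None).
Proof.
case: w => [|x [|y w]] // _; rewrite evalS_good.
  have -> : subst_word (sig_of (fun x => Some [:: x])) [:: x, y & w] = [:: x, y & w].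
    by rewrite -[RHS]subst_single.
  by [].
by apply/allP.
Qed.

Lemma count_pos (x : nat) s : (x \in s) = (0 < count_mem x s).
Proof. by rewrite -has_pred1 has_count. Qed.

Lemma part3 : ~ has_finite_basis Dinf_mul.
Proof.
move=> [Sigma [HS Hd]].
set K := foldr (fun e k => maxn (size (undup e.1) + size (undup e.2)) k) 0 Sigma.
have HK : forall e, e \in Sigma -> size (undup e.1) <= K /\ size (undup e.2) <= K.
  rewrite /K; elim: Sigma {HS Hd K} => [|e0 S IH] // e; rewrite in_cons.
  case/orP => [/eqP ->|/IH [H1 H2]] /=; split.
  - by apply: leq_trans (leq_maxl _ _); apply: leq_addr.
  - by apply: leq_trans (leq_maxl _ _); apply: leq_addl.
  - by apply: leq_trans (leq_maxr _ _).
  - by apply: leq_trans (leq_maxr _ _).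
have Ssat : forall e, e \in Sigma -> satisfies (mulS K.+1) e.1 e.2.
  move=> e eS; case: (HS e eS) => ne1 ne2 sat.
  case: (HK e eS) => K1 K2.
  case: e {eS} ne1 ne2 sat K1 K2 => s t /= ne1 ne2 sat K1 K2.
  have E := sat_meq sat ne1 ne2.
  have Sz := meq_size E.
  have Mem : forall z, (z \in s) = (z \in t) by move=> z; rewrite !count_pos (meq_count z E).
  move=> phi.
  case: s ne1 sat K1 E Sz Mem => [|x [|y s]] // _ _ K1 E Sz Mem.
    case: t ne2 Sz Mem {K2 E} => [|x' [|y' t]] // _ _ Mem.
    have : x \in [:: x'] by rewrite -Mem mem_head.
    by rewrite inE => /eqP ->.
  case: t ne2 Sz Mem E K2 => [|x' [|y' t]] // _ _ Mem E K2.
  case G: (all (goodb phi) [:: x, y & s]).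
  - have G' : all (goodb phi) [:: x', y' & t].
      by apply/allP => z; rewrite -Mem => zs; move/allP: G; apply.
    rewrite !evalS_good //.
    have c1 := @core K _ _ (sig_of phi) E (leq_trans K1 (leqnSn _)) (@sig_ne phi).
    have c2 := @core K _ _ (sig_of phi) (meq_sym E) (leq_trans K2 (leqnSn _)) (@sig_ne phi).
    case I1: (infix (subst_word (sig_of phi) [:: x, y & s]) (Uw K.+1)).
      by rewrite (c1 I1) I1.
    case I2: (infix (subst_word (sig_of phi) [:: x', y' & t]) (Uw K.+1)) => //.
    by rewrite (c2 I2) I2 in I1.
  - have G' : ~~ all (goodb phi) [:: x', y' & t].
      apply/negP => /allP H; move/negP: G; apply; apply/allP => z zs.
      by apply: H; rewrite -Mem.
    by rewrite !evalS_bad // G.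
have E0 := witness_meq K.+1.
have ne0 : Uw K.+1 != [::] by rewrite /Uw; case: (Cw _).
have ne1 : [:: 0; 0] ++ Cw K.+1 != [::] by [].
have D0 := Hd _ _ ne0 ne1 (meq_sat E0 ne0 ne1).
have S0 := sound (@mulSA K.+1) Ssat D0 (fun x => Some [:: x]).
have Sz := meq_size E0.
rewrite !evalS_single ?infix_refl in S0; first last.
- by rewrite size_Uw; lia.
- by [].
case I: (infix _ _) S0 => // -[] /esym E'.

Qed.


Theorem mainTheorem5 :
  [/\ in_Com_malcev_Fin Dinf_mul,
      (forall n : nat, 1 <= n -> isoterm Dinf_mul (zimin n)) &
      ~ has_finite_basis Dinf_mul].
Proof.
split; [exact: part1 | exact: part2 | exact: part3].
Qed.
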